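(* Let $B_n=\binom{2n}{n}$ for $n\ge0$ and $B_n=0$ for $n<0$, and let $D_m(B;n)=\det(B_{i+j+m})_{i,j=0}^{n-1}$. Then for every integer $m\ge1$: $D_{-m}(B;n)=0$ for $1\le n\le m$, and for $n\ge m+1$ $$D_{-m}(B;n)=(-1)^{\binom{m+1}{2}}\,2^{\,n-m-1}\,p_{m+1}(n-m-1).$$
   Context: For integers $m,n\ge 0$, $p_m(n)=\prod_{1\le i\le j\le m-1}\frac{2n+i+j}{i+j}$ (empty product $=1$). *)

(* Defs.v *)
From mathcomp Require Import all_boot all_order all_algebra.
Set Implicit Arguments. Unset Strict Implicit. Unset Printing Implicit Defensive.
Import Order.TTheory GRing.Theory Num.Theory.
Local Open Scope ring_scope.

Definition Bc (k : int) : rat :=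
  match k with
  | Posz k' => ('C(k'.*2, k'))%:R
  | Negz _ => 0
  end.

Definition Dhank (m : int) (n : nat) : rat :=
  \det (\matrix_(i < n, j < n) Bc (i%:Z + j%:Z + m)).

Definition pm (m n : nat) : rat :=
  \prod_(1 <= i < m) \prod_(i <= j < m) (((2 * n + i + j)%N)%:R / ((i + j)%N)%:R).

(* Main.v *)
Require Import Defs.
From mathcomp Require Import all_boot all_order all_algebra.
From mathcomp Require Import fingroup perm ring zify.
Import Order.TTheory GRing.Theory Num.Theory.
Local Open Scope ring_scope.

Definition gq (q l : nat) : rat := (-1) ^+ l * ('C(q + l - 1, l))%:R.
Definition Fq (q p s : nat) : rat := \sum_(l < s.+1) gq q l * ('C(p, s - l))%:R.

Lemma gq0 l : gq 0 l = (l == 0%N)%:R.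
Proof.
rewrite /gq; case: l => [|l]; first by rewrite expr0 mul1r bin0.
by rewrite bin_small ?mulr0 //= add0n subSS subn0.
Qed.

Lemma gqS q l : gq q.+1 l.+1 = gq q l.+1 - gq q.+1 l.
Proof.
rewrite /gq !addSn !subSS !subn0 addnS /= exprS binS natrD.
rewrite subn1 /=; ring.
Qed.

Lemma Fq_rec q p s : Fq q.+1 p s.+1 = Fq q p s.+1 - Fq q.+1 p s.
Proof.
rewrite /Fq big_ord_recl [in X in _ = X - _]big_ord_recl.
have -> : gq q.+1 0 = gq q 0 by rewrite /gq !addn0 !expr0 !bin0.
rewrite -addrA; congr (_ + _).
rewrite -sumrB; apply: eq_bigr => i _.
by rewrite gqS /bump /= subSS mulrBl.
Qed.

Lemma Fq_eq q d s : Fq q (q + d) s = ('C(d, s))%:R.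
Proof.
elim: q d s => [|q IH] d s.
  rewrite /Fq big_ord_recl gq0 /= mul1r subn0 big1 ?addr0 // => i _.
  by rewrite gq0 /= mul0r.
elim: s => [|s IHs].
  by rewrite /Fq big_ord1 /gq !bin0 expr0 mul1r.
rewrite Fq_rec IHs addSnnS IH binS natrD addrK //.
Qed.

Lemma sum_window (f : nat -> rat) n r s : (r + s < n)%N ->
  (forall k, (k < r)%N -> f k = 0) -> (forall k, (r + s < k)%N -> f k = 0) ->
  \sum_(k < n) f k = \sum_(l < s.+1) f (l + r)%N.
Proof.
move=> hn h1 h2.
rewrite -(big_mkord xpredT) (@big_cat_nat _ _ _ r) //=; last by lia.
rewrite [X in X + _]big1_seq ?add0r; last first.
  by move=> k /andP[_]; rewrite mem_index_iota => /andP[_ hk]; apply: h1.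
rewrite (@big_cat_nat _ _ _ (r + s.+1)) /=; [|lia|lia].
rewrite [X in _ + X]big1_seq ?addr0; last first.
  by move=> k /andP[_]; rewrite mem_index_iota => /andP[hk _]; apply: h2; lia.
by rewrite -{1}(add0n r) big_addn addKn big_mkord.
Qed.

Lemma sign_even l c : (-1) ^+ (l + c.+1 + c).+1 = (-1) ^+ l :> rat.
Proof.
have -> : (l + c.+1 + c).+1 = (l + 2 * c.+1)%N by lia.
by rewrite exprD exprM expr2 mulN1r opprK expr1n mulr1.
Qed.

Lemma idb n i c : (i < n)%N ->
  \sum_(k < n) ('C(i.*2, i + k))%:R * ((-1) ^+ (k + c).+1 * ('C(k + c, c.*2.+1))%:R)
  = if (c < i)%N then ('C((i - c.+1).*2, i - c.+1))%:R else 0 :> rat.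
Proof.
move=> hi; case: ltnP => hc; last first.
  apply: big1 => k _; case: (leqP k c) => hk.
    by rewrite (@bin_small (k + c)) ?mulr0 // ltnS -addnn leq_add2r.
  by rewrite bin_small ?mul0r // -addnn ltn_add2l (leq_ltn_trans hc).
rewrite (@sum_window (fun k : nat => ('C(i.*2, i + k))%:R * ((-1) ^+ (k + c).+1 * ('C(k + c, c.*2.+1))%:R)) n c.+1 (i - c.+1)); [|lia| |]; last first.
- move=> k hk; rewrite bin_small ?mul0r //; lia.
- move=> k hk; rewrite (@bin_small (k + c)) ?mulr0 //; lia.
have := Fq_eq (c.+1).*2 (i - c.+1).*2 (i - c.+1).
rewrite /Fq => <-; apply: eq_bigr => l _.
have hl : (l <= i - c.+1)%N by have := ltn_ord l; lia.
rewrite sign_even /gq mulrCA -mulrA; congr (_ * _); rewrite mulrC; congr (_ * _).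
  congr (_%:R); rewrite -(@bin_sub _ l); last by lia.
  congr 'C(_, _); lia.
congr (_%:R); rewrite -(@bin_sub _ (i - c.+1 - l)); last by lia.
congr 'C(_, _); lia.
Qed.

Lemma sum_trunc (h : nat -> nat) n c : (c <= n)%N -> (forall t, (c <= t)%N -> h t = 0%N) ->
  (\sum_(t < n) h t = \sum_(t < c) h t)%N.
Proof.
move=> hc hz; rewrite -(big_mkord xpredT) (big_cat_nat (leq0n c) hc) /= big_mkord.
rewrite [X in (_ + X)%N]big1_seq ?addn0 //.
by move=> k /andP[_]; rewrite mem_index_iota => /andP[hk _]; apply: hz.
Qed.

Lemma ida n i b : (i < n)%N -> (b < n)%N ->
  (\sum_(k < n) 'C(i.*2, i + k) * (if (k : nat) == 0%N then 'C(b.*2, b) else 'C(b.*2, b + k) * 2)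
   = 'C((i + b).*2, i + b))%N.
Proof.
case: n => [//|n] hi hb.
rewrite big_ord_recl /= addn0.
set h := fun t => ('C(i.*2, i + t.+1) * 'C(b.*2, b + t.+1))%N.
have -> : (\sum_(t < n) 'C(i.*2, i + bump 0 t) *
     (if bump 0 t == 0%N then 'C(b.*2, b) else 'C(b.*2, b + bump 0 t) * 2) =
     \sum_(t < i) h t + \sum_(t < b) h t)%N.
  rewrite -(@sum_trunc h n i) //; last first.
    by move=> t ht; rewrite /h bin_small ?mul0n //; lia.
  rewrite -(@sum_trunc h n b) //; last first.
    by move=> t ht; rewrite /h (@bin_small b.*2) ?muln0 //; lia.
  rewrite -big_split /=; apply: eq_bigr => t _.
  by rewrite /bump /= /h mulnA muln2 addnn.
rewrite doubleD -binomial.Vandermonde; symmetry.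
rewrite -(big_mkord xpredT (fun j => 'C(i.*2, j) * 'C(b.*2, i + b - j))%N).
rewrite (@big_cat_nat _ _ _ i) //=; last by lia.
rewrite (@big_cat_nat _ _ _ i.+1 i (i + b).+1) //=; last by lia.
rewrite big_nat1 addKn addnCA; congr (_ + _)%N; congr (_ + _)%N.
  rewrite big_nat_rev /= add0n big_mkord; apply: eq_bigr => t _.
  have ht := ltn_ord t.
  rewrite /h -(@bin_sub i.*2 (i + t.+1)); last by lia.
  congr (_ * 'C(_, _))%N; first (congr 'C(_, _); lia); lia.
rewrite -{1}(add0n i.+1) big_addn.
have -> : ((i + b).+1 - i.+1 = b)%N by lia.
rewrite big_mkord; apply: eq_bigr => t _.
have ht := ltn_ord t.
rewrite /h -(@bin_sub b.*2 (b + t.+1)); last by lia.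
congr ('C(_, _) * 'C(_, _))%N; lia.
Qed.

Definition Amx n : 'M[rat]_n := \matrix_(i, k) ('C((i : nat).*2, i + k))%:R.
Definition gent (m k j : nat) : rat :=
  if (m <= j)%N then
    ((if k == 0%N then 'C((j - m).*2, j - m) else 'C((j - m).*2, (j - m) + k) * 2)%N)%:R
  else (-1) ^+ (k + (m - j.+1)).+1 * ('C(k + (m - j.+1), (m - j.+1).*2.+1))%:R.
Definition Gmx m n : 'M[rat]_n := \matrix_(k, j) gent m k j.

Lemma Bc_neg (x : int) : (x < 0)%R -> Bc x = 0.
Proof. by case: x. Qed.

Lemma factor m n : \matrix_(i < n, j < n) Bc (i%:Z + j%:Z + - (m%:Z)) = Amx n *m Gmx m n.
Proof.
apply/matrixP => i j; rewrite !mxE.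
under eq_bigr do rewrite !mxE.
case: (leqP m j) => hj.
  have -> : (i%:Z + j%:Z + - m%:Z = ((i + (j - m))%N)%:Z)%R by lia.
  rewrite /gent hj /=.
  under eq_bigr do rewrite -natrM.
  rewrite -natr_sum ida //; have := ltn_ord j; lia.
rewrite /gent leqNgt hj /= idb //.
case: ltnP => hc.
  have -> : (i%:Z + j%:Z + - m%:Z = ((i - (m - j.+1).+1)%N)%:Z)%R by lia.
  by [].
by rewrite Bc_neg //; lia.
Qed.

Lemma detA n : \det (Amx n) = 1.
Proof.
rewrite det_trig; last first.
  apply/is_trig_mxP => i j hij; rewrite mxE bin_small //; lia.
by rewrite big1 // => i _; rewrite mxE addnn binn.
Qed.

Fixpoint rotp m N : 'S_(m + N) :=
  match m return 'S_(m + N) with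
  | 0 => 1%g
  | m'.+1 => lift_perm (inord m') ord_max (rotp m' N)
  end.

Lemma rotpE m N (i : 'I_(m + N)) :
  (rotp m N i : nat) = if (i < m)%N then (i + N)%N else (i - m)%N.
Proof.
elim: m i => [|m IH] i /=; first by rewrite perm1 subn0.
case: (unliftP (inord m) i) => [j ->|->].
  have hj : (j < m + N)%N := ltn_ord j.
  have hm : (m < (m + N).+1)%N by rewrite ltnS leq_addr.
  rewrite lift_perm_lift lift_max IH.
  have -> : (lift (inord m) j : nat) = bump m j by rewrite /= inordK.
  rewrite /bump; case: (leqP m j) => h; rewrite ?add1n ?add0n.
    by rewrite ltnS ltnNge h /= subSS.
  by rewrite ltnS (ltnW h).
have hm : (m < (m + N).+1)%N by rewrite ltnS leq_addr.
by rewrite lift_perm_id /= inordK // ltnSn.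
Qed.

Lemma odd_rotp m N : odd_perm (rotp m N) = odd (m * N).
Proof.
elim: m => [|m IH] /=; first by rewrite odd_perm1.
have hm : (m < (m + N).+1)%N by rewrite ltnS leq_addr.
rewrite odd_lift_perm IH inordK // /=.
rewrite mulSn oddD oddD; by case: (odd m); case: (odd N); case: (odd (m * N)).
Qed.

Fixpoint revp n : 'S_n :=
  match n return 'S_n with
  | 0 => 1%g
  | n'.+1 => lift_perm ord_max ord0 (revp n')
  end.

Lemma revpE n (i : 'I_n) : (revp n i : nat) = (n - i.+1)%N.
Proof.
elim: n i => [|n IH] i /=; first by case: i.
case: (unliftP ord_max i) => [j ->|->].
  have hj : (j < n)%N := ltn_ord j. by rewrite lift_perm_lift lift0 IH subSS lift_max subnSK.
by rewrite lift_perm_id /= subnn.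
Qed.

Lemma odd_revp n : odd_perm (revp n) = odd 'C(n, 2).
Proof.
elim: n => [|n IH] /=; first by rewrite odd_perm1.
rewrite odd_lift_perm IH /= binS bin1 oddD.
by case: (odd n); case: (odd 'C(n, 2)).
Qed.

Lemma det_row_perm n (s : 'S_n) (A : 'M[rat]_n) :
  \det (row_perm s A) = (-1) ^+ s * \det A.
Proof. by rewrite row_permE det_mulmx det_perm. Qed.

Definition Ymx m N : 'M[rat]_m := \matrix_(a, j) gent m (a + N) j.
Definition Xmx m N : 'M[rat]_(N, m) := \matrix_(a, j) gent m a j.
Definition Tmx m N : 'M[rat]_N := \matrix_(a, b) gent m a (m + b).

Lemma block_G m N : (0 < N)%N ->
  row_perm (rotp m N) (Gmx m (m + N)) = block_mx (Ymx m N) 0 (Xmx m N) (Tmx m N).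
Proof.
move=> hN; apply/matrixP => i j; rewrite !mxE.
case: (splitP i) => [a ha | a ha]; rewrite mxE; case: (splitP j) => [c hc | c hc];
  rewrite !mxE rotpE ha.
- by rewrite ltn_ord -hc.
- rewrite ltn_ord hc /gent leq_addr addKn.
  have hc' := ltn_ord c.
  rewrite ifF; last by lia.
  by rewrite bin_small ?mul0n //; lia.
- by rewrite ltnNge leq_addr /= addKn -hc.
- by rewrite ltnNge leq_addr /= addKn hc.
Qed.

Lemma detT m N : (0 < N)%N -> \det (Tmx m N) = 2 ^+ N.-1.
Proof.
move=> hN; rewrite -det_tr det_trig; last first.
  apply/is_trig_mxP => i j hij; rewrite !mxE /gent leq_addr addKn.
  rewrite ifF; last by lia.
  by rewrite bin_small ?mul0n //; lia.
case: N hN => [//|N] _ /=.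
rewrite big_ord_recl !mxE /gent leq_addr addKn /= bin0 mul1r.
rewrite -[in RHS](card_ord N) -prodr_const; apply: eq_bigr => i _.
by rewrite !mxE /gent leq_addr addKn lift0 /= addnn binn mul1n.
Qed.

Lemma natrS' n : (n.+1)%:R = n%:R + 1 :> rat.
Proof. by rewrite -addn1 natrD. Qed.

Lemma Hprod (a : rat) c : \prod_(i < (c.*2).+1) (a + c%:R - i%:R)
  = a * \prod_(1 <= t < c.+1) (a ^+ 2 - t%:R ^+ 2).
Proof.
elim: c a => [|c IH] a.
  by rewrite big_ord1 big_geq // subr0 addr0 mulr1.
rewrite doubleS big_ord_recl big_ord_recr /=.
have -> : \prod_(i < (c.*2).+1) (a + c.+1%:R - (bump 0 (widen_ord (leqnSn _) i))%:R)
   = \prod_(i < (c.*2).+1) (a + c%:R - i%:R).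
  by apply: eq_bigr => i _; rewrite /bump /= natrS' natrS'; ring.
rewrite IH [in RHS]big_nat_recr //= /bump /= !natrS' -addnn natrD; ring.
Qed.

Lemma binQ k c : ('C(k + c, c.*2.+1))%:R * ((c.*2.+1)`!)%:R
  = k%:R * \prod_(1 <= t < c.+1) (k%:R ^+ 2 - t%:R ^+ 2) :> rat.
Proof.
case: (leqP k c) => hk.
  rewrite bin_small ?mul0r; last by lia.
  case: k hk => [|k] hk; first by rewrite mul0r.
  rewrite (@big_cat_nat _ _ _ k.+2) //=.
  by rewrite big_nat_recr //= subrr mulr0 mul0r mulr0.
rewrite -natrM bin_ffact ffact_prod natr_prod -Hprod.
apply: eq_bigr => i _; have hi := ltn_ord i.
by rewrite natrB ?natrD //; lia.
Qed.

Definition Qp c : {poly rat} := \prod_(1 <= t < c.+1) ('X - (t%:R ^+ 2)%:P).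

Lemma Qp_horner c x : (Qp c).[x] = \prod_(1 <= t < c.+1) (x - t%:R ^+ 2).
Proof. by rewrite /Qp horner_prod; apply: eq_bigr => t _; rewrite hornerXsubC. Qed.

Lemma size_Qp c : size (Qp c) = c.+1.
Proof. by rewrite /Qp size_prod_XsubC size_iota subn1. Qed.

Lemma monic_Qp c : Qp c \is monic.
Proof. exact: monic_prod_XsubC. Qed.

Definition alph m N : 'rV[rat]_m := \row_(a < m) ((-1) ^+ (a + N) * (a + N)%:R).
Definition bet m : 'rV[rat]_m :=
  \row_(j < m) ((-1) ^+ (m - j.+1).+1 / ((m - j.+1).*2.+1)`!%:R).
Definition Wmx m N : 'M[rat]_m :=
  \matrix_(a < m, j < m) (Qp (m - j.+1)).[((a + N)%:R) ^+ 2].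

Lemma Y_eq m N : Ymx m N = diag_mx (alph m N) *m Wmx m N *m diag_mx (bet m).
Proof.
apply/matrixP => a j; rewrite mul_mx_diag mul_diag_mx !mxE /gent.
rewrite leqNgt ltn_ord /=.
set c := (m - j.+1)%N; set k := (a + N)%N.
have f0 : ((c.*2.+1)`!)%:R != 0 :> rat by rewrite pnatr_eq0 -lt0n fact_gt0.
have hb : ('C(k + c, c.*2.+1))%:R = k%:R * (Qp c).[k%:R ^+ 2] / ((c.*2.+1)`!)%:R :> rat.
  by rewrite Qp_horner -binQ mulfK.
rewrite hb -addnS exprD; field.
exact: f0.
Qed.

Definition Lmx m : 'M[rat]_m := \matrix_(j, d) (Qp j)`_d.
Definition xv m N : 'rV[rat]_m := \row_(a < m) ((a + N)%:R ^+ 2).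

Lemma W_eq m N : row_perm (revp m) (Wmx m N)^T = Lmx m *m Vandermonde m (xv m N).
Proof.
apply/matrixP => j a; rewrite !mxE revpE.
have -> : (m - (m - j.+1).+1 = j)%N by have := ltn_ord j; lia.
rewrite (@horner_coef_wide _ m); last by rewrite size_Qp ltn_ord.
by apply: eq_bigr => d _; rewrite !mxE.
Qed.

Lemma detL m : \det (Lmx m) = 1.
Proof.
rewrite det_trig; last first.
  by apply/is_trig_mxP => i j hij; rewrite mxE nth_default // size_Qp.
apply: big1 => i _; rewrite mxE.
have := monic_Qp i; rewrite monicE lead_coefE size_Qp /=.
by move/eqP.
Qed.

Lemma detW m N : (-1) ^+ (revp m) * \det (Wmx m N) = \det (Vandermonde m (xv m N)).
Proof. by rewrite -det_tr -det_row_perm W_eq det_mulmx detL mul1r. Qed.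

Lemma pm_rec m x : pm m.+2 x =
  pm m.+1 x * \prod_(1 <= i < m.+2) (((2 * x + i + m.+1)%N)%:R / ((i + m.+1)%N)%:R).
Proof.
rewrite /pm big_nat_recr //= big_nat1.
rewrite (@eq_big_nat _ _ _ 1 m.+1 _ (fun i => \prod_(i <= j < m.+1)
   (((2 * x + i + j)%N)%:R / ((i + j)%N)%:R) *
   (((2 * x + i + m.+1)%N)%:R / ((i + m.+1)%N)%:R))); last first.
  by move=> i /andP[_ hi]; rewrite big_nat_recr // ltnW.
by rewrite big_split /= [X in _ = _ * X]big_nat_recr //= !mulrA.
Qed.

Lemma factD a b : ((a + b)`! = a`! * \prod_(i < b) (a + i.+1))%N.
Proof.
elim: b => [|b IH]; first by rewrite addn0 big_ord0 muln1.
rewrite addnS factS IH big_ord_recr /= mulnCA addnS; congr (_ * _)%N; exact: mulnC.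
Qed.

Lemma ratio m x : (m + x.+1)%:R * (\prod_(i < m) ((m + x.+1)%:R ^+ 2 - (i + x.+1)%:R ^+ 2))
   * ((m.*2.+1)`!%:R)^-1
  = \prod_(1 <= i < m.+2) (((2 * x + i + m.+1)%N)%:R / ((i + m.+1)%N)%:R) :> rat.
Proof.
rewrite [RHS]big_nat_recr //= big_add1 /= big_mkord prodf_div.
have e1 : \prod_(i < m) ((m + x.+1)%:R ^+ 2 - (i + x.+1)%:R ^+ 2) =
   (\prod_(i < m) ((m - i)%N)%:R) * \prod_(i < m) ((2 * x + i.+1 + m.+1)%N)%:R :> rat.
  rewrite -big_split; apply: eq_bigr => i _ /=.
  rewrite natrB; last exact: ltnW.
  rewrite !natrD !natrS'; ring.
have key : ((m.*2.+1)`!)%:R = (m.+1)%:R * (\prod_(i < m) ((m - i)%N)%:R)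
     * \prod_(i < m) ((i.+1 + m.+1)%N)%:R :> rat.
  rewrite -!natr_prod -ffact_prod ffactnn -!natrM -factS.
  have -> : (m.*2.+1 = m.+1 + m)%N by rewrite -addnn addSn.
  rewrite factD; congr (_ * _)%:R; apply: eq_bigr => i _; exact: addnC.
rewrite e1 key.
set P1 := \prod_(i < m) _; set P2 := \prod_(i < m) ((2 * x + _ + _)%N)%:R.
set P3 := \prod_(i < m) ((_ + m.+1)%N)%:R.
have h1 : P1 != 0.
  by rewrite /P1 -natr_prod -ffact_prod ffactnn pnatr_eq0 -lt0n fact_gt0.
have h3 : P3 != 0.
  by rewrite /P3 -natr_prod pnatr_eq0 -lt0n prodn_gt0.
rewrite !natrD !natrS'.
field.
rewrite h1 h3 /= -!natrS' -natrD !pnatr_eq0 //.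
Qed.

Definition mag m x : rat := (\prod_(a < m) ((a + x.+1)%N)%:R) *
  (\prod_(i < m) \prod_(j < m | (i < j)%N) (((j + x.+1)%N)%:R ^+ 2 - ((i + x.+1)%N)%:R ^+ 2)) *
  \prod_(c < m) ((c.*2.+1)`!%:R)^-1.

Lemma dprod_rec m (f : nat -> nat -> rat) :
  \prod_(i < m.+1) \prod_(j < m.+1 | (i < j)%N) f i j =
  (\prod_(i < m) \prod_(j < m | (i < j)%N) f i j) * \prod_(i < m) f i m.
Proof.
rewrite big_ord_recr /= [X in _ * X]big1 ?mulr1; last first.
  by move=> j hj; have := ltn_ord j; lia.
rewrite -big_split; apply: eq_bigr => i _ /=.
by rewrite big_mkcond big_ord_recr /= -big_mkcond /= ltn_ord.
Qed.

Lemma mag_rec m x : mag m.+1 x = mag m x * ((m + x.+1)%:R *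
  (\prod_(i < m) ((m + x.+1)%:R ^+ 2 - (i + x.+1)%:R ^+ 2)) * ((m.*2.+1)`!%:R)^-1).
Proof.
rewrite /mag (dprod_rec m (fun i j => ((j + x.+1)%N)%:R ^+ 2 - ((i + x.+1)%N)%:R ^+ 2)).
rewrite !big_ord_recr /=; ring.
Qed.

Lemma mag_eq m x : mag m x = pm m.+1 x.
Proof.
elim: m => [|m IH].
  by rewrite /mag /pm !big_ord0 big_geq // !mulr1.
by rewrite mag_rec IH pm_rec ratio.
Qed.

Lemma sign_sq (b : bool) : (-1) ^+ b * (-1) ^+ b = 1 :> rat.
Proof. by rewrite -signr_addb addbb. Qed.

Lemma detG m N : (0 < N)%N ->
  \det (Gmx m (m + N)) = (-1) ^+ (rotp m N) * (\det (Ymx m N) * 2 ^+ N.-1).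
Proof.
move=> hN; have := @det_row_perm _ (rotp m N) (Gmx m (m + N)).
rewrite block_G // det_lblock detT // => ->.
by rewrite mulrA sign_sq mul1r.
Qed.

Lemma detY m N : \det (Ymx m N) = \prod_(a < m) alph m N 0 a *
  ((-1) ^+ (revp m) * \det (Vandermonde m (xv m N))) * \prod_(j < m) bet m 0 j.
Proof.
rewrite Y_eq !det_mulmx !det_diag -detW.
by rewrite mulrA sign_sq mul1r.
Qed.

Lemma prod_rev m (F : nat -> rat) : \prod_(j < m) F (m - j.+1)%N = \prod_(c < m) F c.
Proof.
rewrite (reindex_inj rev_ord_inj) /=; apply: eq_bigr => j _.
by rewrite subnSK ?ltn_ord // subKn // ltnW.
Qed.

Lemma sign_total m N : (-1) ^+ (m * N) * (-1) ^+ ('C(m, 2) + m * N) * (-1) ^+ 'C(m, 2)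
  * (-1) ^+ ('C(m, 2) + m) = (-1) ^+ 'C(m.+1, 2) :> rat.
Proof.
rewrite -!exprD.
have -> : (m * N + ('C(m, 2) + m * N) + 'C(m, 2) + ('C(m, 2) + m) =
   'C(m.+1, 2) + 2 * (m * N + 'C(m, 2)))%N by rewrite binS bin1; lia.
by rewrite exprD exprM expr2 mulN1r opprK expr1n mulr1.
Qed.

Lemma sum_id m : (\sum_(a < m) a = 'C(m, 2))%N.
Proof. by rewrite -(big_mkord xpredT (fun a => a)) bin2_sum. Qed.

Lemma main_eq m x : Dhank (- (m%:Z)) (m + x.+1) = (-1) ^+ 'C(m.+1, 2) * 2 ^+ x * pm m.+1 x.
Proof.
rewrite /Dhank factor det_mulmx detA mul1r detG // detY.
rewrite -mag_eq /mag /=.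
have ha : \prod_(a < m) alph m x.+1 0 a =
    (-1) ^+ ('C(m, 2) + m * x.+1) * \prod_(a < m) ((a + x.+1)%N)%:R.
  rewrite /alph; under eq_bigr do rewrite mxE.
  rewrite big_split /= prodrXr big_split /= sum_id sum_nat_const card_ord.
  by rewrite -natr_prod.
have hb : \prod_(j < m) bet m 0 j = (-1) ^+ ('C(m, 2) + m) * \prod_(c < m) ((c.*2.+1)`!%:R)^-1.
  rewrite /bet; under eq_bigr do rewrite mxE.
  rewrite big_split /= (prod_rev m (fun c => (-1) ^+ c.+1))
     (prod_rev m (fun c => ((c.*2.+1)`!%:R)^-1)) prodrXr.
  congr (_ ^+ _ * _); under eq_bigr do rewrite -addn1.
  by rewrite big_split /= sum_id sum_nat_const card_ord muln1.
have hV : \det (Vandermonde m (xv m x.+1)) = \prod_(i < m) \prod_(j < m | (i < j)%N)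
     (((j + x.+1)%N)%:R ^+ 2 - ((i + x.+1)%N)%:R ^+ 2).
  by rewrite det_Vandermonde; apply: eq_bigr => i _; apply: eq_bigr => j _; rewrite !mxE.
rewrite ha hb hV odd_rotp odd_revp !signr_odd -(sign_total m x.+1).
ring.
Qed.

Theorem theorem7 (m : nat) (hm : (1 <= m)%N) :
  (forall n : nat, (1 <= n <= m)%N -> Dhank (- (m%:Z)) n = 0) /\
  (forall n : nat, (m.+1 <= n)%N ->
     Dhank (- (m%:Z)) n =
       (-1) ^+ 'C(m.+1, 2) * 2 ^+ (n - m.+1) * pm m.+1 (n - m.+1)).
Proof.
split.
  case=> [//|n] /andP[_ hn].
  rewrite /Dhank (expand_det_row _ ord0) big1 // => j _.
  rewrite mxE Bc_neg ?mul0r //=; have := ltn_ord j; lia.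
move=> n hn; set x := (n - m.+1)%N.
have e : n = (m + x.+1)%N by rewrite /x; lia.
by rewrite {1}e main_eq.
Qed.
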